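(* Let $\alpha:\mathbb{C}\to\mathbb{C}$ be an exponential automorphism, i.e. a function satisfying $\alpha(z_1+z_2)=\alpha(z_1)+\alpha(z_2)$ and $\alpha(e^z)=e^{\alpha(z)}$ for all $z,z_1,z_2\in\mathbb{C}$. Then $\alpha$ is a field automorphism of $\mathbb{C}$, i.e. $\alpha(z_1+z_2)=\alpha(z_1)+\alpha(z_2)$, $\alpha(z_1z_2)=\alpha(z_1)\alpha(z_2)$ for all $z_1,z_2\in\mathbb{C}$, and $\alpha(1)=1$. *)

(* Defs.v *)
From Stdlib Require Import Reals.
From Coquelicot Require Export Coquelicot.
Open Scope C_scope.

Definition Cexp (z : C) : C :=
  (exp (Re z) * cos (Im z), exp (Re z) * sin (Im z))%R.

Definition exponential_automorphism (alpha : C -> C) : Prop :=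
  (forall z1 z2 : C, alpha (z1 + z2) = alpha z1 + alpha z2) /\
  (forall z : C, alpha (Cexp z) = Cexp (alpha z)).

(* Main.v *)
Require Import Defs.
From Stdlib Require Import Reals Lra Psatz.
From Coquelicot Require Import Coquelicot.
Open Scope C_scope.

Lemma cos_sin_exists (x y : R) : (x*x + y*y = 1)%R ->
  exists t, cos t = x /\ sin t = y.
Proof.
  intros H.
  assert (Hb : (-1 <= x <= 1)%R) by nra.
  assert (Hs : sqrt (1 - x²) = Rabs y).
  { replace (1 - x²)%R with (y²) by (unfold Rsqr; lra). apply sqrt_Rsqr_abs. }
  destruct (Rle_dec 0 y) as [Hy|Hy].
  - exists (acos x). split. apply cos_acos; lra.
    rewrite sin_acos, Hs by lra. apply Rabs_right; lra.
  - exists (- acos x)%R. split. rewrite cos_neg. apply cos_acos; lra.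
    rewrite sin_neg, sin_acos, Hs by lra. rewrite Rabs_left by lra. lra.
Qed.

Lemma Cexp_plus (a b : C) : Cexp (a + b) = Cexp a * Cexp b.
Proof.
  destruct a as [a1 a2], b as [b1 b2]. unfold Cexp, Cplus, Cmult; simpl.
  rewrite exp_plus, cos_plus, sin_plus. f_equal; ring.
Qed.

Lemma Cexp_0 : Cexp 0 = 1.
Proof.
  unfold Cexp; simpl. rewrite exp_0, cos_0, sin_0.
  apply injective_projections; simpl; ring.
Qed.

Lemma Cexp_surj (w : C) : w <> 0 -> exists z, Cexp z = w.
Proof.
  intros Hw. destruct w as [x y].
  assert (Hr : (0 < Cmod (x, y))%R) by (apply Cmod_gt_0; exact Hw).
  set (r := Cmod (x,y)) in *.
  assert (Hr2 : (r * r = x*x + y*y)%R).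
  { unfold r, Cmod; simpl. rewrite sqrt_sqrt by nra. ring. }
  destruct (cos_sin_exists (x / r) (y / r)) as [t [Ht1 Ht2]].
  { replace (x / r * (x / r) + y / r * (y / r))%R with ((x*x+y*y)/(r*r))%R by (field; lra).
    rewrite <- Hr2. field. lra. }
  exists (ln r, t). unfold Cexp; simpl. rewrite exp_ln by lra.
  rewrite Ht1, Ht2. apply injective_projections; simpl; field; lra.
Qed.

Theorem mainTheorem3 (alpha : C -> C) :
  exponential_automorphism alpha ->
  (forall z1 z2 : C, alpha (z1 + z2) = alpha z1 + alpha z2) /\
  (forall z1 z2 : C, alpha (z1 * z2) = alpha z1 * alpha z2) /\
  alpha 1 = 1.
Proof.
  intros [Hadd Hexp].
  assert (H0 : alpha 0 = 0).
  { pose proof (Hadd 0 0) as H. rewrite Cplus_0_l in H.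
    destruct (alpha 0) as [p q]. unfold Cplus in H; simpl in H.
    pose proof (f_equal fst H) as H1; pose proof (f_equal snd H) as H2; simpl in H1, H2.
    apply injective_projections; simpl; lra. }
  split; [exact Hadd|]. split.
  - intros z1 z2.
    destruct (Ceq_dec z1 0) as [E1|E1].
    { subst. rewrite Cmult_0_l, H0, Cmult_0_l. reflexivity. }
    destruct (Ceq_dec z2 0) as [E2|E2].
    { subst. rewrite Cmult_0_r, H0, Cmult_0_r. reflexivity. }
    destruct (Cexp_surj z1 E1) as [u1 <-].
    destruct (Cexp_surj z2 E2) as [u2 <-].
    rewrite <- Cexp_plus, !Hexp, Hadd, Cexp_plus. reflexivity.
  - rewrite <- Cexp_0, Hexp, H0. reflexivity.
Qed.
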